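(* Let $P$ be a normal program. Then the well-founded model $WFM(P)$ has a finite number of true atoms if and only if $P$ has the bounded term-size property.
   Context: Programs are over a first-order language with finitely many function and constant symbols. A normal program $P$ is a set of clauses $B \leftarrow L_1,\ldots,L_n$ where $B$ is an atom and each $L_i$ is a literal (an atom $A$ or a negated atom $\neg A$); $\mathcal{H}_P$ is its Herbrand base. A 3-valued interpretation is a pair $I=\langle Tr;Fa\rangle$ of subsets of $\mathcal{H}_P$; an atom $A$ is true in $I$ if $A\in Tr$ and false if $A \in Fa$; $\neg A$ is true in $I$ iff $A$ is false in $I$, and false iff $A$ is true in $I$. For a 3-valued interpretation $I$ and sets $Tr, Fa$ of ground atoms define $True^P_I(Tr)=\{A \mid A$ is not true in $I$, and there is a clause $B\leftarrow L_1,\ldots,L_n$ in $P$ and a ground substitution $\theta$ with $A=B\theta$ such that for every $1\le i\le n$, either $L_i\theta$ is true in $I$ or $L_i\theta\in Tr\}$; $False^P_I(Fa)=\{A \mid A$ is not false in $I$, and for every clause $B\leftarrow L_1,\ldots,L_n$ in $P$ and ground substitution $\theta$ with $A=B\theta$ there is some $i$ with $L_i\theta$ false in $I$ or $L_i\theta\in Fa\}$. Both are monotonic; $\mathcal{T}_I$ is the least fixed point of $True^P_I$ (obtained by iterating from $\emptyset$) and $\mathcal{F}_I$ the greatest fixed point of $False^P_I$ (obtained by iterating from $\mathcal{H}_P$). Define $WFM_0=\langle\emptyset;\emptyset\rangle$, $WFM_{\alpha+1}=WFM_\alpha\cup\langle \mathcal{T}_{WFM_\alpha};\mathcal{F}_{WFM_\alpha}\rangle$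 (componentwise union), and $WFM_\alpha=\bigcup_{\beta<\alpha}WFM_\beta$ for limit ordinals $\alpha$. $WFM(P)$ is $WFM_\delta$ for the least ordinal $\delta$ such that $\mathcal{T}_{WFM_\delta}$ and $\mathcal{F}_{WFM_\delta}$ are both empty; it is the well-founded model of $P$. Bounded term-size: an application of $True^P_I(Tr)$ has the bounded term-size property if there is an integer $L$ such that the size of every ground substitution $\theta$ used to produce an atom in $True^P_I(Tr)$ is less than $L$. The program $P$ has the bounded term-size property if every application of $True^P_I$ used to construct $WFM(P)$ has the bounded term-size property with the same bound $L$. *)

(* Defs.v *)
From Stdlib Require Import List Arith.
Import ListNotations.

Section LP.

(* function symbols (constants = arity 0) and predicate symbols *)
Variable F : Type.
Variable ar : F -> nat.
Variable Pd : Type.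

Inductive term : Type :=
| Var : nat -> term
| App : F -> list term -> term.

Inductive gterm : Type :=
| GApp : F -> list gterm -> gterm.

Fixpoint wf_term (t : term) : Prop :=
  match t with
  | Var _ => True
  | App f ts => length ts = ar f /\ fold_right (fun u acc => wf_term u /\ acc) True ts
  end.

Fixpoint wf_gterm (t : gterm) : Prop :=
  match t with
  | GApp f ts => length ts = ar f /\ fold_right (fun u acc => wf_gterm u /\ acc) True ts
  end.

Fixpoint gsize (t : gterm) : nat :=
  match t with
  | GApp _ ts => S (fold_right (fun u acc => gsize u + acc) 0 ts)
  end.

Fixpoint vars (t : term) : list nat :=
  match t with
  | Var x => [x]
  | App _ ts => flat_map vars ts
  end.

Record atom : Type := mkAtom { apred : Pd; aargs : list term }.
Record gatom : Type := mkGAtom { gpred : Pd; gargs : list gterm }.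

Inductive literal : Type :=
| Pos : atom -> literal
| Neg : atom -> literal.

Record clause : Type := mkClause { head : atom; body : list literal }.

Definition program := list clause.

Definition lit_atom (l : literal) : atom :=
  match l with Pos a => a | Neg a => a end.

Definition wf_atom (a : atom) : Prop := Forall wf_term (aargs a).
Definition wf_clause (c : clause) : Prop :=
  wf_atom (head c) /\ Forall (fun l => wf_atom (lit_atom l)) (body c).
Definition wf_program (P : program) : Prop := Forall wf_clause P.

Definition HB (A : gatom) : Prop := Forall wf_gterm (gargs A).

Definition atom_vars (a : atom) : list nat := flat_map vars (aargs a).
Definition clause_vars (c : clause) : list nat :=
  atom_vars (head c) ++ flat_map (fun l => atom_vars (lit_atom l)) (body c).

Definition gsubst := nat -> gterm.

Fixpoint subst (th : gsubst) (t : term) : gterm :=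
  match t with
  | Var x => th x
  | App f ts => GApp f (map (subst th) ts)
  end.

Definition subst_atom (th : gsubst) (a : atom) : gatom :=
  mkGAtom (apred a) (map (subst th) (aargs a)).

Definition ground_subst_for (c : clause) (th : gsubst) : Prop :=
  forall x, In x (clause_vars c) -> wf_gterm (th x).

Definition subst_size (c : clause) (th : gsubst) : nat :=
  fold_right (fun x acc => Nat.max (gsize (th x)) acc) 0 (clause_vars c).

Definition aset := gatom -> Prop.

Record interp : Type := mkInterp { Tr : aset; Fa : aset }.

Definition lit_true (I : interp) (l : literal) (th : gsubst) : Prop :=
  match l with
  | Pos a => Tr I (subst_atom th a)
  | Neg a => Fa I (subst_atom th a)
  end.

Definition lit_false (I : interp) (l : literal) (th : gsubst) : Prop :=
  match l with
  | Pos a => Fa I (subst_atom th a)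
  | Neg a => Tr I (subst_atom th a)
  end.

(* L theta \in S for a set S of atoms: only positive literals are atoms *)
Definition lit_in (S : aset) (l : literal) (th : gsubst) : Prop :=
  match l with
  | Pos a => S (subst_atom th a)
  | Neg _ => False
  end.

Definition produces (I : interp) (S : aset) (c : clause) (th : gsubst)
    (A : gatom) : Prop :=
  ~ Tr I A /\ ground_subst_for c th /\ A = subst_atom th (head c) /\
  (forall l, In l (body c) -> lit_true I l th \/ lit_in S l th).

Definition TrueOp (P : program) (I : interp) (S : aset) : aset :=
  fun A => exists c th, In c P /\ produces I S c th A.

Definition FalseOp (P : program) (I : interp) (S : aset) : aset :=
  fun A => HB A /\ ~ Fa I A /\
    forall c th, In c P -> ground_subst_for c th -> A = subst_atom th (head c) ->
      exists l, In l (body c) /\ (lit_false I l th \/ lit_in S l th).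

Fixpoint iterT (P : program) (I : interp) (n : nat) : aset :=
  match n with
  | O => fun _ => False
  | S m => TrueOp P I (iterT P I m)
  end.

(* T_I: least fixed point, obtained by iterating from the empty set *)
Definition TI (P : program) (I : interp) : aset :=
  fun A => exists n, iterT P I n A.

(* F_I: greatest fixed point of False^P_I inside the Herbrand base *)
Definition FI (P : program) (I : interp) : aset :=
  fun A => exists S : aset,
    (forall B, S B -> HB B) /\ (forall B, S B -> FalseOp P I S B) /\ S A.

Definition succ_stage (P : program) (I : interp) : interp :=
  mkInterp (fun A => Tr I A \/ TI P I A) (fun A => Fa I A \/ FI P I A).

Definition union_stage (K : interp -> Prop) : interp :=
  mkInterp (fun A => exists I, K I /\ Tr I A) (fun A => exists I, K I /\ Fa I A).

(* the stages WFM_alpha: generated from <empty;empty> by successor and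
   unions (limit stages) *)
Inductive stage (P : program) : interp -> Prop :=
| stage0 : stage P (mkInterp (fun _ => False) (fun _ => False))
| stageS : forall I, stage P I -> stage P (succ_stage P I)
| stageU : forall K : interp -> Prop,
    (forall I, K I -> stage P I) -> stage P (union_stage K).

Definition is_WFM (P : program) (W : interp) : Prop :=
  stage P W /\ (forall A, ~ TI P W A) /\ (forall A, ~ FI P W A).

Definition finite_set (S : aset) : Prop :=
  exists l : list gatom, forall A, S A -> In A l.

Definition bounded_term_size (P : program) : Prop :=
  exists L : nat, forall I, stage P I -> forall n A,
    TrueOp P I (iterT P I n) A ->
    exists c th, In c P /\ produces I (iterT P I n) c th A /\ subst_size c th < L.

End LP.

(* Main.v *)
Require Import Defs.
From Stdlib Require Import List Arith Lia Classical FunctionalExtensionality PropExtensionality.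
Import ListNotations.


Fixpoint allLists {A} (k : nat) (C : list A) : list (list A) :=
  match k with 0 => [[]] | S k => [] :: flat_map (fun x => map (cons x) (allLists k C)) C end.

Lemma allLists_spec {A} k C (l : list A) : length l <= k -> (forall x, In x l -> In x C) ->
  In l (allLists k C).
Proof.
  revert l; induction k; intros [|x l] Hlen Hin; simpl in *; try lia; auto.
  right. apply in_flat_map. exists x. split; auto. apply in_map. apply IHk; auto; lia.
Qed.

Definition sumf {X} (g : X -> nat) (l : list X) := fold_right (fun x a => g x + a) 0 l.

Lemma sumf_in {X} (g : X -> nat) l x : In x l -> g x <= sumf g l.
Proof. induction l; simpl; [tauto|]; intros [->|H]; [lia|]; specialize (IHl H); lia. Qed.

Section Terms.
Variable F : Type.

Lemma gsize_pos (t : gterm F) : 1 <= gsize F t.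
Proof. destruct t; simpl; lia. Qed.

Lemma sumg_len (ts : list (gterm F)) : length ts <= fold_right (fun u acc => gsize F u + acc) 0 ts.
Proof. induction ts; simpl; auto. pose proof (gsize_pos a); lia. Qed.

Lemma sumg_in u (ts : list (gterm F)) : In u ts -> gsize F u <= fold_right (fun u acc => gsize F u + acc) 0 ts.
Proof. induction ts; simpl; [tauto|]; intros [->|H]; [lia|]; specialize (IHts H); lia. Qed.

Fixpoint Gl (Fl : list F) n : list (gterm F) :=
  match n with 0 => [] | S n => flat_map (fun f => map (GApp F f) (allLists n (Gl Fl n))) Fl end.

Lemma Gl_spec Fl (HF : forall f, In f Fl) n t : gsize F t <= n -> In t (Gl Fl n).
Proof.
  revert t; induction n; intros [f ts] H; simpl in *; [lia|].
  apply in_flat_map; exists f; split; auto; apply in_map; apply allLists_spec.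
  - pose proof (sumg_len ts); lia.
  - intros u Hu; apply IHn; pose proof (sumg_in u ts Hu); lia.
Qed.

Definition term_ind2 (Pt : term F -> Prop) (HV : forall x, Pt (Var F x))
  (HA : forall f ts, Forall Pt ts -> Pt (App F f ts)) : forall t, Pt t :=
  fix rec t := match t with
  | Var _ x => HV x
  | App _ f ts => HA f ts ((fix recl ts := match ts return Forall Pt ts with
       | [] => Forall_nil _ | u :: us => Forall_cons _ (rec u) (recl us) end) ts)
  end.

Fixpoint tsize (t : term F) : nat :=
  match t with Var _ _ => 1 | App _ _ ts => S (fold_right (fun u acc => tsize u + acc) 0 ts) end.

Lemma subst_bound th B t : (forall x, In x (vars F t) -> gsize F (th x) <= B) ->
  gsize F (subst F th t) <= tsize t * S B.
Proof.
  induction t as [x|f ts Hall] using term_ind2; intro Hv.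
  - simpl. specialize (Hv x (or_introl eq_refl)); lia.
  - simpl in *.
    assert (fold_right (fun u acc => gsize F u + acc) 0 (map (subst F th) ts) <=
            fold_right (fun u acc => tsize u + acc) 0 ts * S B); [|nia].
    clear f. induction Hall as [|a ts Ha Hall IH]; simpl; [lia|].
    simpl in Hv.
    assert (h1 := Ha (fun x Hx => Hv x (in_or_app _ _ _ (or_introl Hx)))).
    assert (h2 := IH (fun x Hx => Hv x (in_or_app _ _ _ (or_intror Hx)))).
    nia.
Qed.

Lemma max_fold (th : gsubst F) l x : In x l ->
  gsize F (th x) <= fold_right (fun x acc => Nat.max (gsize F (th x)) acc) 0 l.
Proof. induction l; simpl; [tauto|]; intros [->|H]; [lia|]; specialize (IHl H); lia. Qed.
End Terms.
Section S.
Variable F : Type. Variable ar : F -> nat. Variable Pd : Type. Variable P : program F Pd.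

Local Notation interp := (interp F Pd).
Local Notation tr := (Tr F Pd).
Local Notation fa := (Fa F Pd).
Local Notation stg := (stage F ar Pd P).
Local Notation succ := (succ_stage F ar Pd P).
Local Notation un := (union_stage F Pd).
Local Notation itT := (iterT F ar Pd P).

Definition le (I J : interp) := (forall A, tr I A -> tr J A) /\ (forall A, fa I A -> fa J A).

Lemma ext I J : le I J -> le J I -> I = J.
Proof.
  destruct I as [t1 f1], J as [t2 f2]; intros [a b] [c d]; simpl in *.
  f_equal; apply functional_extensionality; intro x; apply propositional_extensionality; split; auto.
Qed.

Lemma le_refl I : le I I. Proof. split; auto. Qed.
Lemma le_trans I J K : le I J -> le J K -> le I K.
Proof. intros [a b] [c d]; split; auto. Qed.
Lemma le_succ I : le I (succ I). Proof. split; simpl; auto. Qed.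
Lemma le_bot J : le (mkInterp F Pd (fun _ => False) (fun _ => False)) J.
Proof. split; simpl; tauto. Qed.
Lemma le_un K z : K z -> le z (un K).
Proof. intro Kz; split; intros A H; simpl; exists z; auto. Qed.
Lemma un_lub K x : (forall z, K z -> le z x) -> le (un K) x.
Proof. intro H; split; simpl; intros A [z [Kz Hz]]; apply (H z Kz); auto. Qed.

Definition E I := forall y, stg y -> le y I -> le I y \/ le (succ y) I.

Lemma claim1 x : stg x -> E x -> forall y, stg y -> le y x \/ le (succ x) y.
Proof.
  intros Hx Ex y Hy; induction Hy as [|y Hy IH|K HK IH].
  - left; apply le_bot.
  - destruct IH as [Hyx|Hfx].
    + destruct (Ex y Hy Hyx) as [Hxy|Hfy].
      * assert (x = y) by (apply ext; auto). subst. right; apply le_refl.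
      * left; auto.
    + right; eapply le_trans; [exact Hfx| apply le_succ].
  - destruct (classic (forall z, K z -> le z x)) as [H|H].
    + left; apply un_lub; auto.
    + apply not_all_ex_not in H; destruct H as [z H].
      apply imply_to_and in H; destruct H as [Kz Hn].
      destruct (IH z Kz) as [?|Hf]; [contradiction|].
      right; eapply le_trans; [exact Hf| apply le_un; auto].
Qed.

Lemma claim2 x : stg x -> E x.
Proof.
  induction 1 as [|x Hx IH|K HK IH]; intros y Hy Hle.
  - left; apply le_bot.
  - destruct (claim1 x Hx IH y Hy) as [Hyx|Hf].
    + destruct (IH y Hy Hyx) as [Hxy|Hfy].
      * assert (x = y) by (apply ext; auto). subst. right; apply le_refl.
      * right; eapply le_trans; [exact Hfy| apply le_succ].
    + left; auto.
  - destruct (classic (le (un K) y)) as [H|H]; [left; auto|].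
    assert (exists z, K z /\ ~ le z y) as [z [Kz Hn]].
    { apply NNPP; intro Hc; apply H; apply un_lub; intros z Kz;
      apply NNPP; intro; apply Hc; eauto. }
    destruct (claim1 z (HK z Kz) (IH z Kz) y Hy) as [Hyz|Hf].
    + destruct (IH z Kz y Hy Hyz) as [?|Hfy]; [contradiction|].
      right; eapply le_trans; [exact Hfy| apply le_un; auto].
    + exfalso; apply Hn; eapply le_trans; [apply le_succ|exact Hf].
Qed.

Lemma compar x y : stg x -> stg y -> le y x \/ le (succ x) y.
Proof. intros Hx Hy; apply (claim1 x Hx (claim2 x Hx) y Hy). Qed.

Lemma produces_mono I S S' c th A :
  (forall B, S B -> S' B) -> produces F ar Pd I S c th A -> produces F ar Pd I S' c th A.
Proof.
  intros HS [H1 [H2 [H3 H4]]]; repeat split; auto.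
  intros l Hl; destruct (H4 l Hl) as [H|H]; [left; auto|right].
  destruct l; simpl in *; auto.
Qed.

Lemma itT_S I n A : itT I n A -> itT I (S n) A.
Proof.
  revert A; induction n; simpl; [tauto|].
  intros A [c [th [Hc Hp]]]; exists c, th; split; auto; eapply produces_mono; eauto.
Qed.

Lemma itT_mono I n m A : n <= m -> itT I n A -> itT I m A.
Proof. induction 1; auto. intro; apply itT_S; auto. Qed.

Lemma uniq_stage I J A : stg I -> stg J -> ~ tr I A -> tr (succ I) A ->
   ~ tr J A -> tr (succ J) A -> I = J.
Proof.
  intros HI HJ nI sI nJ sJ.
  set (D := fun K => stg K /\ ~ tr K A).
  assert (HU : stg (un D)) by (apply stageU; intros K [? ?]; auto).
  assert (nU : ~ tr (un D) A) by (simpl; intros [K [[_ h] h']]; auto).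
  assert (forall K, stg K -> ~ tr K A -> tr (succ K) A -> K = un D) as key.
  { intros K HK nK sK.
    destruct (compar K (un D) HK HU) as [h|h].
    - apply ext; auto. apply le_un; split; auto.
    - exfalso; apply nU; apply h; auto. }
  rewrite (key I), (key J); auto.
Qed.

Lemma least (Q : nat -> Prop) : (exists n, Q n) -> exists n, Q n /\ forall m, Q m -> n <= m.
Proof.
  intros [n Hn].
  induction n as [n IH] using (well_founded_induction lt_wf).
  destruct (classic (exists m, Q m /\ m < n)) as [[m [Qm Hm]]|H].
  - apply (IH m Hm Qm).
  - exists n; split; auto. intros m Qm. destruct (le_lt_dec n m); auto.
    exfalso; apply H; eauto.
Qed.

Definition W := un stg.

Lemma W_stage : stg W. Proof. apply stageU; auto. Qed.

Lemma TI_not I A : TI F ar Pd P I A -> ~ tr I A.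
Proof. intros [n Hn]; destruct n; simpl in Hn; [contradiction|].
  destruct Hn as [c [th [_ [H _]]]]; auto. Qed.

Lemma FI_not I A : FI F ar Pd P I A -> ~ fa I A.
Proof. intros [S [_ [H HS]]]; destruct (H A HS) as [_ [h _]]; auto. Qed.

Lemma W_WFM : is_WFM F ar Pd P W.
Proof.
  assert (h : le (succ W) W) by (apply le_un; apply stageS, W_stage).
  destruct h as [h1 h2].
  split; [apply W_stage|split].
  - intros A HA. apply (TI_not _ _ HA). apply h1; simpl; auto.
  - intros A HA. apply (FI_not _ _ HA). apply h2; simpl; auto.
Qed.
Lemma TrueOp_not I S A : TrueOp F ar Pd P I S A -> ~ tr I A.
Proof. intros [c [th [_ [H _]]]]; auto. Qed.

Lemma TrueOp_succ I n A : TrueOp F ar Pd P I (itT I n) A -> tr (succ I) A.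
Proof. intro H; simpl; right; exists (S n); exact H. Qed.

Lemma fin_bounded : finite_set F Pd (tr W) -> bounded_term_size F ar Pd P.
Proof.
  intros [l Hl].
  assert (Hmain : forall l', exists L, forall A, In A l' -> forall I, stg I -> forall n,
     TrueOp F ar Pd P I (itT I n) A -> exists c th, In c P /\
       produces F ar Pd I (itT I n) c th A /\ subst_size F Pd c th < L).
  { induction l' as [|a l' IH].
    - exists 0; simpl; tauto.
    - destruct IH as [L' HL'].
      destruct (classic (exists I n, stg I /\ TrueOp F ar Pd P I (itT I n) a))
        as [[I0 [n1 [HI0 H1]]]|Hno].
      + destruct (least (fun n => TrueOp F ar Pd P I0 (itT I0 n) a) (ex_intro _ n1 H1))
          as [n0 [H0 Hmin]].
        pose proof H0 as H0'.
        destruct H0 as [c0 [th0 [Hc0 Hp0]]].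
        exists (Nat.max L' (S (subst_size F Pd c0 th0))).
        intros A [<-|HA] I HI n Hn.
        * assert (I = I0).
          { apply (uniq_stage I I0 a HI HI0); eauto using TrueOp_not, TrueOp_succ. }
          subst I0.
          exists c0, th0; split; auto; split; [|lia].
          eapply produces_mono; [|exact Hp0].
          intros B; apply itT_mono; apply Hmin; auto.
        * destruct (HL' A HA I HI n Hn) as [c [th [? [? ?]]]]; exists c, th; split; [auto|split; [auto|lia]].
      + exists L'. intros A [<-|HA] I HI n Hn.
        * exfalso; apply Hno; eauto.
        * apply (HL' A HA I HI n Hn). }
  destruct (Hmain l) as [L HL]; exists L; intros I HI n A Hn; apply (HL A); auto.
  apply Hl. simpl. exists (succ I). split; [apply stageS; auto|]. eapply TrueOp_succ; eauto.
Qed.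
Lemma bounded_fin (Ffin : exists l : list F, forall f : F, In f l) :
  bounded_term_size F ar Pd P -> finite_set F Pd (tr W).
Proof.
  intros [L HL].
  assert (Hq : forall I, stg I -> forall A, tr I A -> exists c th, In c P /\
      A = subst_atom F Pd th (Defs.head F Pd c) /\ subst_size F Pd c th < L).
  { induction 1 as [|I HI IH|K HK IH]; simpl.
    - tauto.
    - intros A [H|[n Hn]]; auto. destruct n; simpl in Hn; [tauto|].
      destruct (HL I HI n A Hn) as [c [th [Hc [[_ [_ [Heq _]]] Hs]]]]; eauto.
    - intros A [I [KI HA]]; eauto. }
  destruct Ffin as [Fl HF].
  set (M := sumf (fun c => sumf (fun t => tsize F t * S L) (aargs F Pd (Defs.head F Pd c))) P).
  set (K := sumf (fun c => length (aargs F Pd (Defs.head F Pd c))) P).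
  exists (flat_map (fun p => map (mkGAtom F Pd p) (allLists K (Gl F Fl M)))
            (map (fun c => apred F Pd (Defs.head F Pd c)) P)).
  intros A [I [HI HA]].
  destruct (Hq I HI A HA) as [c [th [Hc [-> Hs]]]].
  unfold subst_atom. apply in_flat_map. exists (apred F Pd (Defs.head F Pd c)).
  split; [apply in_map_iff; eauto|]. apply in_map. apply allLists_spec.
  - rewrite length_map. apply (sumf_in (fun c => length (aargs F Pd (Defs.head F Pd c))) P c Hc).
  - intros u Hu. apply in_map_iff in Hu. destruct Hu as [t [<- Ht]].
    apply Gl_spec; auto.
    eapply Nat.le_trans; [apply (subst_bound F th L t)|].
    + intros x Hx. assert (In x (clause_vars F Pd c)).
      { unfold clause_vars, atom_vars. apply in_or_app; left; apply in_flat_map; eauto. }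
      pose proof (max_fold F th _ x H). unfold subst_size in Hs. lia.
    + eapply Nat.le_trans; [apply (sumf_in (fun t => tsize F t * S L) _ t Ht)|].
      apply (sumf_in (fun c => sumf (fun t => tsize F t * S L) (aargs F Pd (Defs.head F Pd c))) P c Hc).
Qed.
End S.

Theorem theorem1 (F : Type) (ar : F -> nat) (Pd : Type)
  (Ffin : exists l : list F, forall f : F, In f l)
  (P : program F Pd) (HP : wf_program F ar Pd P) :
  exists W : interp F Pd,
    is_WFM F ar Pd P W /\
    (finite_set F Pd (Tr F Pd W) <-> bounded_term_size F ar Pd P).
Proof.
  exists (W F ar Pd P). split; [apply W_WFM|split].
  - apply fin_bounded.
  - apply bounded_fin; auto.
Qed.
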